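(* Let $\mathbf{x}=x_1,\ldots,x_n$, $\mathbf{u}=u_1,\ldots,u_m$ be differential indeterminates over $\mathbb{C}$ and $\mathbf{f}=f_1,\ldots,f_n$, $\mathbf{g}=g_1,\ldots,g_s\in\mathbb{C}[\mathbf{x},\mathbf{u}]$. Assume that $1\in[\dot{\mathbf{x}}-\mathbf{f},\mathbf{g}]\subseteq\mathbb{C}\{\mathbf{x},\mathbf{u}\}$ and that the algebraic variety $V(\mathbf{g})\subset\mathbb{C}^{n+m}$ is nonempty. Let $I_0\subset I_1\subset\cdots$ and $\rho$ be as defined in the context. Fix $i\in\{0,\ldots,\rho\}$ and let $\mathbf{g}_i\subset\mathbb{C}[\mathbf{x},\mathbf{u}]$ be any finite system of generators of $I_i$. Then $1\in[\dot{\mathbf{x}}-\mathbf{f},\mathbf{g}_i]$ (i.e. the system $\dot{\mathbf{x}}-\mathbf{f}=0,\ \mathbf{g}_i=0$ has no solution). Moreover, for $i=\rho$, $1$ belongs to the polynomial ideal $(\dot{\mathbf{x}}-\mathbf{f},\mathbf{g}_\rho,\dot{\mathbf{g}}_\rho)\subset\mathbb{C}[\mathbf{x},\dot{\mathbf{x}},\mathbf{u},\dot{\mathbf{u}}]$.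
   Context: $\mathbb{C}\{\mathbf{x},\mathbf{u}\}$ is the differential polynomial ring with derivation $x_j^{(p)}\mapsto x_j^{(p+1)}$, $u_k^{(p)}\mapsto u_k^{(p+1)}$ and $\mathbb{C}$ as constants; $\dot z=z^{(1)}$, $[\cdot]$ is the differential ideal generated and $(\cdot)$ the ordinary polynomial ideal. For $h\in\mathbb{C}[\mathbf{x},\mathbf{u}]$ put $\widetilde h:=\sum_{j}\frac{\partial h}{\partial x_j}f_j+\sum_k\frac{\partial h}{\partial u_k}\dot u_k\in\mathbb{C}[\mathbf{x},\mathbf{u},\dot{\mathbf{u}}]$, and for an ideal $I\subset\mathbb{C}[\mathbf{x},\mathbf{u}]$ let $\widetilde I\subset\mathbb{C}[\mathbf{x},\mathbf{u},\dot{\mathbf{u}}]$ be the ideal generated by $I$ and all $\widetilde h$, $h\in I$. Define $I_0:=\sqrt{(\mathbf{g})}$ and $I_{i+1}:=\sqrt{\widetilde I_i\cap\mathbb{C}[\mathbf{x},\mathbf{u}]}$, and $\rho:=\min\{i\in\mathbb{Z}_{\ge0}:\dim V(I_i)\le 0\}$, where $V(I)$ is the zero set of $I$ in $\mathbb{C}^{n+m}$ and the empty set has dimension $-1$. *)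

(* Defs.v *)
From HB Require Import structures.
From mathcomp Require Import all_boot all_order all_algebra.
From mathcomp Require Import finmap.
From mathcomp Require Import Rstruct.
From mathcomp Require Import complex.
From mathcomp Require Import monalg.
From mathcomp Require Import mpoly.

Set Implicit Arguments.
Unset Strict Implicit.
Unset Printing Implicit Defensive.
Import GRing.Theory.
Local Open Scope ring_scope.

Notation CC := (Rdefinitions.R[i]).

Section Ideals.
Variable A : comNzRingType.

Definition ideal_gen (S : A -> Prop) : A -> Prop :=
  fun p => exists r : seq (A * A),
    (forall q, List.In q r -> S q.2) /\ p = \sum_(q <- r) q.1 * q.2.

Definition radical (I : A -> Prop) : A -> Prop := fun p => exists k : nat, I (p ^+ k).

Definition is_ideal (J : A -> Prop) : Prop :=
  J 0 /\ (forall a b, J a -> J b -> J (a + b)) /\ (forall a b, J b -> J (a * b)).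

Definition prime_ideal (P : A -> Prop) : Prop :=
  is_ideal P /\ ~ P 1 /\ (forall a b, P (a * b) -> P a \/ P b).

Definition krull_dim_le (J : A -> Prop) (d : nat) : Prop :=
  ~ exists P : nat -> A -> Prop,
      (forall k, (k <= d.+1)%N -> prime_ideal (P k) /\ (forall a, J a -> P k a)) /\
      (forall k, (k < d.+1)%N ->
         (forall a, P k a -> P k.+1 a) /\ (exists a, P k.+1 a /\ ~ P k a)).

Definition diff_ideal_gen (delta : A -> A) (S : A -> Prop) : A -> Prop :=
  fun p => forall J : A -> Prop, is_ideal J -> (forall a, J a -> J (delta a)) ->
    (forall a, S a -> J a) -> J p.
End Ideals.

Section Varieties.
Variable N : nat.
Definition zeroset (I : (mpoly.mpoly (N) CC) -> Prop) : ('I_N -> CC) -> Prop :=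
  fun a => forall p, I p -> p.@[a] = 0.
Definition vanishing (V : ('I_N -> CC) -> Prop) : (mpoly.mpoly (N) CC) -> Prop :=
  fun p => forall a, V a -> p.@[a] = 0.
(* dim V <= d, where dim V is the Krull dimension of the coordinate ring
   C[x]/I(V)  (the empty set has dimension -1) *)
Definition variety_dim_le (V : ('I_N -> CC) -> Prop) (d : nat) : Prop :=
  krull_dim_le (vanishing V) d.
End Varieties.

Section Setting.
Variables (n m : nat).

(* ---- C[x,u] = (mpoly.mpoly (n+m) CC): x_j = 'X_(lshift m j), u_k = 'X_(rshift n k) *)
Definition xvar (j : 'I_n) : 'I_(n + m) := lshift m j.
Definition uvar (k : 'I_m) : 'I_(n + m) := rshift n k.

(* ---- C[x,u,u'] = (mpoly.mpoly ((n+m)+m) CC): old variables first, then u'_k *)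
Definition iota1 (p : (mpoly.mpoly (n + m) CC)) : (mpoly.mpoly ((n + m) + m) CC) :=
  mpoly.mmap (@mpolyC _ CC) (fun v => 'X_(lshift m v)) p.
Definition udot1 (k : 'I_m) : (mpoly.mpoly ((n + m) + m) CC) := 'X_(rshift (n + m) k).

Variable f : 'I_n -> (mpoly.mpoly (n + m) CC).

Definition tilde (h : (mpoly.mpoly (n + m) CC)) : (mpoly.mpoly ((n + m) + m) CC) :=
  \sum_(j < n) iota1 (mderiv (xvar j) h) * iota1 (f j)
  + \sum_(k < m) iota1 (mderiv (uvar k) h) * udot1 k.

Definition tilde_ideal (I : (mpoly.mpoly (n + m) CC) -> Prop) : (mpoly.mpoly ((n + m) + m) CC) -> Prop :=
  ideal_gen (fun q => exists h, I h /\ (q = iota1 h \/ q = tilde h)).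

(* I~ intersected with C[x,u] *)
Definition next_ideal (I : (mpoly.mpoly (n + m) CC) -> Prop) : (mpoly.mpoly (n + m) CC) -> Prop :=
  radical (fun h => tilde_ideal I (iota1 h)).

Variables (s : nat) (g : 'I_s -> (mpoly.mpoly (n + m) CC)).

Fixpoint Iseq (i : nat) : (mpoly.mpoly (n + m) CC) -> Prop :=
  match i with
  | 0 => radical (ideal_gen (fun p => exists k, p = g k))
  | i'.+1 => next_ideal (Iseq i')
  end.

(* ---- C[x,x',u,u'] = (mpoly.mpoly ((n+m)+(n+m)) CC): v in first block, v' in second *)
Definition iota2 (p : (mpoly.mpoly (n + m) CC)) : (mpoly.mpoly ((n + m) + (n + m)) CC) :=
  mpoly.mmap (@mpolyC _ CC) (fun v => 'X_(lshift (n + m) v)) p.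
Definition dvar2 (v : 'I_(n + m)) : (mpoly.mpoly ((n + m) + (n + m)) CC) :=
  'X_(rshift (n + m) v).
Definition dot2 (p : (mpoly.mpoly (n + m) CC)) : (mpoly.mpoly ((n + m) + (n + m)) CC) :=
  \sum_(v < n + m) iota2 (mderiv v p) * dvar2 v.

(* ---- the differential polynomial ring C{x,u}: polynomials in the
   variables v^(p), v in 'I_(n+m) (the x's and u's), p : nat *)
Definition DVar : choiceType := ('I_(n + m) * nat)%type.
Definition DMonom : monalg.ConomialDef.type := monalg.cmonom DVar.
Definition DPoly : comNzRingType := @monalg.malg DMonom CC.
Definition dvar (v : 'I_(n + m)) (p : nat) : DPoly :=
  monalg.mkmalgU (monalg.ucm ((v, p) : DVar)) 1.
Definition dconst (c : CC) : DPoly := monalg.mkmalgU (monalg.onecm DVar) c.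
Definition iotaD (p : (mpoly.mpoly (n + m) CC)) : DPoly := mpoly.mmap dconst (fun v => dvar v 0) p.
(* the derivation v^(p) |-> v^(p+1), extended by the Leibniz rule *)
Definition dmonom (k : DMonom) : DPoly :=
  \sum_(w <- finsupp k)
     ((k w)%:R * monalg.mkmalgU (monalg.divcm k (monalg.ucm w)) 1 * dvar w.1 w.2.+1).
Definition delta (q : DPoly) : DPoly := monalg.mmap dconst dmonom q.

Definition dideal_sys (G : (mpoly.mpoly (n + m) CC) -> Prop) : DPoly -> Prop :=
  diff_ideal_gen delta
    (fun q => (exists j, q = dvar (xvar j) 1 - iotaD (f j)) \/ (exists p, G p /\ q = iotaD p)).
End Setting.

(* Main.v *)
Require Import Defs.
From HB Require Import structures.
From mathcomp Require Import all_boot all_order all_algebra.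
From mathcomp Require Import finmap Rstruct complex monalg mpoly.
From mathcomp Require classical_sets.
From Stdlib Require Import Classical ClassicalEpsilon.
From mathcomp Require Import ring.
Import GRing.Theory.
Local Open Scope ring_scope.
Section IdealFacts.
Variable A : comNzRingType.
Implicit Types (I J : A -> Prop).

Lemma ideal_sub I a b : is_ideal I -> I a -> I b -> I (a - b).
Proof.
move=> [I0 [ID IM]] Ia Ib; apply: ID => //.
by rewrite -mulN1r; apply: IM.
Qed.

Lemma ideal_mulr I a b : is_ideal I -> I a -> I (a * b).
Proof. by move=> [_ [_ IM]] Ia; rewrite mulrC; apply: IM. Qed.

Lemma ideal_sum I (T : Type) (r : seq T) (F : T -> A) :
  is_ideal I -> (forall t, List.In t r -> I (F t)) -> I (\sum_(t <- r) F t).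
Proof.
move=> [I0 [ID IM]]; elim: r => [|t r IH] H; first by rewrite big_nil.
rewrite big_cons; apply: ID; first by apply: H; left.
by apply: IH => u Hu; apply: H; right.
Qed.

Lemma ideal_gen_ideal (S : A -> Prop) : is_ideal (ideal_gen S).
Proof.
split; first by exists [::]; split => //; rewrite big_nil.
split.
  move=> a b [r1 [H1 ->]] [r2 [H2 ->]]; exists (r1 ++ r2); split.
    by move=> q Hq; case: (List.in_app_or _ _ _ Hq) => ?; [apply: H1|apply: H2].
  by rewrite big_cat.
move=> a b [r [H ->]]; exists (map (fun q => (a * q.1, q.2)) r); split.
  move=> q Hq; have [q' [Eq Hq']] := proj1 (List.in_map_iff _ _ _) Hq; rewrite -Eq /=; exact: H.
by rewrite big_map mulr_sumr; apply: eq_bigr => q _; rewrite mulrA.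
Qed.

Lemma ideal_gen_in (S : A -> Prop) a : S a -> ideal_gen S a.
Proof.
by move=> Sa; exists [:: (1, a)]; split => [q [<-|[]]//|]; rewrite big_seq1 mul1r.
Qed.

Lemma ideal_gen_min (S : A -> Prop) J : is_ideal J -> (forall a, S a -> J a) ->
  forall a, ideal_gen S a -> J a.
Proof.
move=> HJ HS a [r [Hr ->]]; apply: ideal_sum => // q Hq.
by case: HJ => [_ [_ IM]]; apply: IM; apply: HS; apply: Hr.
Qed.

Lemma ideal1 I a : is_ideal I -> I 1 -> I a.
Proof. by move=> HI I1; rewrite -(mulr1 a) mulrC; apply: ideal_mulr. Qed.

Lemma max_ideal_avoid I (S : A -> Prop) :
  is_ideal I -> S 1 -> (forall a b, S a -> S b -> S (a * b)) ->
  (forall s, S s -> ~ I s) ->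
  exists M, is_ideal M /\ (forall x, I x -> M x) /\ (forall s, S s -> ~ M s) /\
    (forall y, ~ M y -> exists s z, S s /\ M (s - z * y)).
Proof.
move=> HI S1 SM IS.
pose P := fun X : A -> Prop =>
  (forall x, ~ X x) \/ (is_ideal X /\ (forall x, I x -> X x) /\ (forall s, S s -> ~ X s)).
have [M [PM Mmax]] : exists M : classical_sets.set A, P M /\
    (forall B, classical_sets.proper M B -> ~ P B).
  apply: classical_sets.Zorn_bigcup => F FP Ftot.
  have [[X0 [FX0 nX0]]|Hno] := classic (exists X, F X /\ exists x, X x); last first.
    by left => x [X FX Xx]; apply: Hno; exists X; split => //; exists x.
  have FI : forall X, F X -> (exists x, X x) -> P X /\ is_ideal X /\ (forall x, I x -> X x) /\ (forall s, S s -> ~ X s).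
    move=> X FX [x Xx]; have := FP X FX; case => [H|H]; first by case: (H x).
    by split => //; right.
  have [_ [HX0 [IX0 _]]] := FI X0 FX0 nX0.
  have Umem : forall x, classical_sets.bigcup F id x -> exists X, F X /\ (exists y, X y) /\ X x.
    by move=> x [X FX Xx]; exists X; split => //; split => //; exists x.
  right; split; last split.
  - split; first by exists X0 => //; case: HX0.
    split.
      move=> a b /Umem [X [FX [neX Xa]]] /Umem [Y [FY [neY Yb]]].
      have [[_ [HX _]] [_ [HY _]]] := (FI X FX neX, FI Y FY neY).
      case: (Ftot X Y FX FY) => [XY|YX].
        by exists Y => //; case: HY => [_ [YD _]]; apply: YD => //; apply: XY.
      by exists X => //; case: HX => [_ [XD _]]; apply: XD => //; apply: YX.
    move=> a b /Umem [X [FX [neX Xb]]]; exists X => //.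
    by have [_ [[_ [_ XM]] _]] := FI X FX neX; apply: XM.
  - by move=> x Ix; exists X0 => //; apply: IX0.
  - move=> s Ss /Umem [X [FX [neX Xs]]].
    by have [_ [_ [_ XS]]] := FI X FX neX; apply: (XS s).
have neM : exists x, M x.
  apply: NNPP => nM; apply: (Mmax I); last by right; split => //; split => //.
  split; first by move=> x Mx; case: nM; exists x.
  by move=> H; apply: nM; exists 0; apply: H; case: HI.
case: PM => [nM|[HM [IM MS]]]; first by case: neM => x /nM.
exists M; split => //; split => //; split => // y My.
apply: NNPP => Hn.
pose M' := fun x => exists m z, M m /\ x = m + z * y.
apply: (Mmax M').
  split; first by move=> x Mx; exists x, 0; rewrite mul0r addr0.
  move=> H; apply: My; apply: H; exists 0, 1; rewrite add0r mul1r; split => //.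
  by case: HM.
right; split; last split.
- split; first by exists 0, 0; rewrite mul0r addr0; split => //; case: HM.
  split.
    move=> a b [m1 [z1 [M1 ->]]] [m2 [z2 [M2 ->]]]; exists (m1 + m2), (z1 + z2).
    split; first by case: HM => [_ [MD _]]; apply: MD.
    by rewrite mulrDl !addrA; congr (_ + _); rewrite -!addrA; congr (_ + _); rewrite addrC.
  move=> a b [m1 [z1 [M1 ->]]]; exists (a * m1), (a * z1); split.
    by case: HM => [_ [_ MM]]; apply: MM.
  by rewrite mulrDr mulrA.
- by move=> x Ix; exists x, 0; rewrite mul0r addr0; split => //; apply: IM.
- move=> s Ss [m [z [Mm Es]]]; apply: Hn; exists s, z; split => //.
  by rewrite Es addrK.
Qed.

Lemma max_ideal_prime M (S : A -> Prop) :
  is_ideal M -> S 1 -> (forall a b, S a -> S b -> S (a * b)) ->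
  (forall s, S s -> ~ M s) ->
  (forall y, ~ M y -> exists s z, S s /\ M (s - z * y)) -> prime_ideal M.
Proof.
move=> HM S1 SM MS Mmax; split => //; split; first by apply: MS.
move=> a b Mab; apply: NNPP => /not_or_and [Ma Mb].
have [s1 [z1 [S1' M1]]] := Mmax a Ma; have [s2 [z2 [S2' M2]]] := Mmax b Mb.
apply: (MS (s1 * s2)); first by apply: SM.
have -> : s1 * s2 = (s1 - z1 * a) * s2 + z1 * (s2 - z2 * b) * a + z1 * z2 * (a * b).
  by ring.
have [_ [MD MMul]] := HM.
apply: (MD); [apply: (MD)|].
- by apply: ideal_mulr.
- by rewrite -mulrA; apply: MMul; apply: ideal_mulr.
- by apply: MMul.
Qed.
End IdealFacts.
From Stdlib Require Import Reals Lra.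
Delimit Scope nat_scope with N.
Delimit Scope ring_scope with R.
Section Uncount.
Local Close Scope ring_scope.
Local Open Scope R_scope.

Definition tri_step (ab : R * R) (x : R) : R * R :=
  let a := fst ab in let b := snd ab in
  let t1 := a + (b - a) / 3 in let t2 := a + 2 * (b - a) / 3 in
  if Rlt_dec x t2 then (t2, b) else (a, t1).

Lemma tri_step_spec a b x : a < b ->
  let ab' := tri_step (a, b) x in
  a <= fst ab' /\ fst ab' < snd ab' /\ snd ab' <= b /\ (x < fst ab' \/ snd ab' < x).
Proof.
move=> ab; rewrite /tri_step /=; case: Rlt_dec => /= H; lra.
Qed.

Arguments tri_step_spec {a b} x.

Fixpoint tri_seq (u : nat -> R) (k : nat) : R * R :=
  match k with 0 => (0, 1) | S k => tri_step (tri_seq u k) (u k) end.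

Lemma tri_seq_lt u k : fst (tri_seq u k) < snd (tri_seq u k).
Proof.
elim: k => [|k IH] /=; first lra.
by case: (tri_seq u k) IH => a b /= IH; have [? [? ?]] := tri_step_spec (u k) IH.
Qed.

Lemma tri_seq_mono u {k l} : (k <= l)%nat ->
  fst (tri_seq u k) <= fst (tri_seq u l) /\ snd (tri_seq u l) <= snd (tri_seq u k).
Proof.
elim: l => [|l IH]; first by rewrite leqn0 => /eqP ->; lra.
rewrite leq_eqVlt => /orP [/eqP ->|]; first lra.
rewrite ltnS => /IH [H1 H2] /=.
have := tri_seq_lt u l; case: (tri_seq u l) H1 H2 => a b /= H1 H2 Hab.
have [? [? [? ?]]] := tri_step_spec (u l) Hab; lra.
Qed.

Lemma R_not_countable (u : nat -> R) : exists r, forall k, u k <> r.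
Proof.
pose E := fun x => exists k, x = fst (tri_seq u k).
have bE : bound E.
  exists 1 => x [k ->]; have := tri_seq_mono u (leq0n k); have := tri_seq_lt u k.
  simpl; lra.
have [r [ub lub]] := completeness E bE (ex_intro _ 0 (ex_intro _ 0%nat erefl)).
have Hlo k : fst (tri_seq u k) <= r by apply: ub; exists k.
have Hhi k : r <= snd (tri_seq u k).
  apply: lub => x [l ->]; case: (leqP k l) => kl.
    have := tri_seq_mono u kl; have := tri_seq_lt u l; lra.
  have := tri_seq_mono u (ltnW kl); have := tri_seq_lt u k; lra.
exists r => k Hk.
have H1 := Hlo k.+1; have H2 := Hhi k.+1; move: H1 H2; rewrite /=.
have := tri_seq_lt u k; case: (tri_seq u k) => a b /= Hab.
have := tri_step_spec (u k) Hab; rewrite Hk; case: (tri_step (a, b) r) => c d /=.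
lra.
Qed.
End Uncount.

Lemma CC_not_countable (u : nat -> CC) : exists c, forall k, u k <> c.
Proof.
have [r Hr] := R_not_countable (fun k => complex.Re (u k)).
exists (complex.Complex r 0) => k Hk; apply: (Hr k); by rewrite Hk.
Qed.

Lemma count_contra (key : CC -> nat * nat) (B : nat * nat -> nat) :
  (forall kk (l : seq CC), uniq l -> (forall c, c \in l -> key c = kk) -> (size l <= B kk)%nat) ->
  False.
Proof.
move=> HB.
have HL : forall kk, exists L : seq CC, forall c, key c = kk -> c \in L.
  move=> kk; apply: NNPP => Hno.
  have step : forall l : seq CC, exists c, key c = kk /\ c \notin l.
    move=> l; apply: NNPP => H; apply: Hno; exists l => c Hc.
    apply: NNPP => Hcl; apply: H; exists c; split => //; exact/negP.
  have build : forall s, exists l : seq CC, uniq l /\ (forall c, c \in l -> key c = kk) /\ size l = s.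
    elim => [|s [l [Hu [Hk Hs]]]]; first by exists [::].
    have [c [Hc Hcl]] := step l; exists (c :: l); split; first by rewrite /= Hcl Hu.
    split; last by rewrite /= Hs.
    by move=> d; rewrite inE => /orP [/eqP ->|/Hk].
  have [l [Hu [Hk Hs]]] := build (B kk).+1.
  by have := HB kk l Hu Hk; rewrite Hs ltnn.
have [Lf HLf] := choice _ HL.
pose u (k : nat) : CC := match @choice.unpickle ((nat * nat) * nat)%type k with
  | Some (kk, j) => nth 0 (Lf kk) j | None => 0 end.
have [c Hc] := CC_not_countable u.
apply: (Hc (choice.pickle ((key c, index c (Lf (key c)))))).
by rewrite /u choice.pickleK nth_index //; apply: HLf.
Qed.
Section LinDep.
Variable N : nat.
Local Notation P := {mpoly CC[N]}.

Lemma lin_dep d (z : 'I_(#|{: 'X_{1..N < d}}|).+1 -> P) :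
  (forall j, (msize (z j) <= d)%N) ->
  exists lam : 'I_(#|{: 'X_{1..N < d}}|).+1 -> CC,
    (exists j, lam j != 0) /\ \sum_j lam j *: z j = 0.
Proof.
move=> Hz.
set D := #|{: 'X_{1..N < d}}|.
pose A : 'M[CC]_(D.+1, D) := \matrix_(j, m) (z j)@_(val (enum_val m)).
have kA : kermx A != 0.
  by rewrite -mxrank_eq0 mxrank_ker subn_eq0 -ltnNge ltnS; exact: rank_leq_col.
have [i [j Hij]] : exists i j, kermx A i j != 0.
  apply: NNPP => H; move/eqP: kA => kA; apply: kA; apply/matrixP => i j.
  rewrite [RHS]mxE; apply/eqP; apply: NNPP => Hn; apply: H; exists i, j; exact/negP.
exists (fun j => kermx A i j); split; first by exists j.
apply/mpolyP => m; rewrite mcoeff0 raddf_sum /=.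
under eq_bigr do rewrite mcoeffZ.
case: (ltnP (mdeg m) d) => Hm.
  pose bm : 'X_{1..N < d} := BMultinom Hm.
  have := congr1 (fun B : 'M[CC]_(D.+1, D) => B i (enum_rank bm : 'I_D)) (mulmx_ker A).
  rewrite [LHS]mxE [RHS]mxE => H; rewrite -[RHS]H; apply: eq_bigr => k _.
  by rewrite [A k _]mxE enum_rankK.
apply: big1 => k _.
have /memN_msupp_eq0 -> : m \notin msupp (z k).
  by apply: msize_mdeg_ge; apply: leq_trans Hm.
by rewrite mulr0.
Qed.
End LinDep.

Section NS.
Variable N : nat.
Local Notation P := {mpoly CC[N]}.

Lemma cong_add (M : P -> Prop) x y x' y' : is_ideal M -> M (x - y) -> M (x' - y') ->
  M ((x + x') - (y + y')).
Proof.
move=> HM H1 H2; have -> : (x + x') - (y + y') = (x - y) + (x' - y') by rewrite opprD addrACA.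
by case: HM => [_ [MD _]]; apply: MD.
Qed.

Lemma cong_mul (M : P -> Prop) x y x' y' : is_ideal M -> M (x - y) -> M (x' - y') ->
  M (x * x' - y * y').
Proof.
move=> HM H1 H2; have -> : x * x' - y * y' = (x - y) * x' + y * (x' - y') by rewrite mulrBl mulrBr addrA subrK.
case: HM => [_ [MD MM]]; apply: MD; last by apply: MM.
by rewrite mulrC; apply: MM.
Qed.

Lemma cong_exp (M : P -> Prop) x y k : is_ideal M -> M (x - y) -> M (x ^+ k - y ^+ k).
Proof.
move=> HM H; elim: k => [|k IH]; first by rewrite !expr0 subrr; case: HM.
by rewrite !exprS; apply: cong_mul.
Qed.

Lemma cong_eval (M : P -> Prop) (a : 'I_N -> CC) : is_ideal M ->
  (forall i, M ('X_i - (a i)%:MP)) -> forall q : P, M (q - (q.@[a])%:MP).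
Proof.
move=> HM Ha q.
have M0 : M 0 by case: HM.
rewrite {1}(mpolyE q) mevalE rmorph_sum.
apply: (big_ind2 (fun x y => M (x - y))); first by rewrite subrr.
  by move=> x1 x2 y1 y2; apply: cong_add.
move=> m _; rewrite -mul_mpolyC rmorphM /=; apply: cong_mul => //; first by rewrite subrr.
rewrite mpolyXE_id rmorph_prod.
apply: (big_ind2 (fun x y => M (x - y))); first by rewrite subrr.
  by move=> x1 x2 y1 y2; apply: cong_mul.
by move=> j _; rewrite rmorphXn; apply: cong_exp.
Qed.

Lemma poly_contra (M : P -> Prop) (i : 'I_N) (K : nat) (cs : 'I_K -> CC)
  (lam : 'I_K -> CC) (z : 'I_K -> P) (pk : P) :
  prime_ideal M -> injective cs -> (exists j, lam j != 0) -> \sum_j lam j *: z j = 0 ->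
  (forall j, M (pk - z j * ('X_i - (cs j)%:MP))) -> ~ M pk ->
  (forall c, ~ M ('X_i - c%:MP)) -> False.
Proof.
move=> [HM [M1 Mpr]] csinj [j0 Hj0] Hsum Hz Mpk Hno.
pose R j := \prod_(l | l != j) ('X_i - (cs l)%:MP).
pose W := \sum_j lam j *: R j.
have MW : M (pk * W).
  have -> : pk * W = \sum_j lam j *: ((pk - z j * ('X_i - (cs j)%:MP)) * R j).
    have E0 : \sum_j lam j *: (z j * ('X_i - (cs j)%:MP) * R j) = 0.
      have : (\sum_j lam j *: z j) * \prod_l ('X_i - (cs l)%:MP) = 0 by rewrite Hsum mul0r.
      rewrite mulr_suml => H; rewrite -[RHS]H; apply: eq_bigr => j _.
      by rewrite (bigD1 j) //= -scalerAl mulrA.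
    have -> : \sum_j lam j *: ((pk - z j * ('X_i - (cs j)%:MP)) * R j) =
        \sum_j lam j *: (pk * R j) - \sum_j lam j *: (z j * ('X_i - (cs j)%:MP) * R j).
      by rewrite -sumrB; apply: eq_bigr => j _; rewrite mulrBl scalerBr.
    by rewrite E0 subr0 /W mulr_sumr; apply: eq_bigr => j _; rewrite scalerAr.
  apply: ideal_sum => // j _; rewrite -mul_mpolyC.
  have [_ [_ MM]] := HM; apply: MM; apply: ideal_mulr => //; exact: Hz.
have MW' : M W by case: (Mpr _ _ MW).
pose Q : {poly CC} := \sum_j lam j *: \prod_(l | l != j) ('X - (cs l)%:P).
have EQ : (map_poly (@mpolyC N CC) Q).['X_i] = W.
  rewrite /Q rmorph_sum horner_sum; apply: eq_bigr => j _.
  rewrite /= map_polyZ hornerZ rmorph_prod horner_prod mul_mpolyC; congr (_ *: _).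
  by apply: eq_bigr => l _; rewrite /= map_polyXsubC hornerXsubC.
have Q0 : Q != 0.
  apply/negP => /eqP Q0; have := congr1 (fun q => q.[cs j0]) Q0.
  rewrite horner0 /Q horner_sum (bigD1 j0) //= [X in _ + X]big1 ?addr0.
    rewrite hornerZ horner_prod => /eqP; rewrite mulf_eq0 (negbTE Hj0) /=.
    apply/negP; apply/prodf_neq0 => l Hl.
    by rewrite hornerXsubC subr_eq0; apply/eqP => /csinj E; move: Hl; rewrite E eqxx.
  move=> j Hj; rewrite hornerZ horner_prod (bigD1 j0) /=; last by rewrite eq_sym.
  by rewrite hornerXsubC subrr mul0r mulr0.
have [rs Hrs] := closed_field_poly_normal Q.
move: MW'; rewrite -EQ Hrs map_polyZ hornerZ rmorph_prod horner_prod.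
case/Mpr => [Mlc|].
  apply: M1; have lc0 : lead_coef Q != 0 by rewrite lead_coef_eq0.
  have -> : (1 : P) = ((lead_coef Q)^-1)%:MP * (lead_coef Q)%:MP.
    by rewrite -rmorphM mulVf // rmorph1.
  by case: HM => [_ [_ MM]]; apply: MM.
clear Hrs; elim: rs => [|r rs IH]; first by rewrite big_nil.
rewrite big_cons; case/Mpr => [|//].
by rewrite /= map_polyXsubC hornerXsubC => H; apply: (Hno r).
Qed.
End NS.

Lemma nullstellensatz N (I : (mpoly.mpoly N CC) -> Prop) (p : (mpoly.mpoly N CC)) : is_ideal I ->
  (forall a, (forall q, I q -> q.@[a] = 0) -> p.@[a] = 0) -> exists k, I (p ^+ k).
Proof.
move=> HI Hp; apply: NNPP => Hn.
pose S := fun s : (mpoly.mpoly N CC) => exists k, s = p ^+ k.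
have S1 : S 1 by exists 0%N.
have SM : forall a b, S a -> S b -> S (a * b).
  by move=> a b [k ->] [l ->]; exists (k + l)%N; rewrite exprD.
have IS : forall s, S s -> ~ I s by move=> s [k ->] Ik; apply: Hn; exists k.
have [M [HM [IM [MS Mmax]]]] := max_ideal_avoid _ _ _ HI S1 SM IS.
have Mpr := max_ideal_prime _ _ _ HM S1 SM MS Mmax.
have M1 : ~ M 1 by apply: MS.
have Mc : forall c : CC, M c%:MP -> c = 0.
  move=> c Mc; apply: NNPP => /eqP c0; apply: M1.
  have -> : (1 : (mpoly.mpoly N CC)) = (c^-1)%:MP * c%:MP by rewrite -rmorphM mulVf // rmorph1.
  by case: HM => [_ [_ MMul]]; apply: MMul.
have Hpt : forall i, exists c, M ('X_i - c%:MP).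
  move=> i; apply: NNPP => Hno.
  have Hc : forall c, exists kz : nat * (mpoly.mpoly N CC), M (p ^+ kz.1 - kz.2 * ('X_i - c%:MP)).
    move=> c; have Hnc : ~ M ('X_i - c%:MP) by move=> H; apply: Hno; exists c.
    by have [s [z [[k ->] Hm]]] := Mmax _ Hnc; exists (k, z).
  have [kz Hkz] := choice _ Hc.
  apply: (@count_contra (fun c => ((kz c).1, msize (kz c).2))
                        (fun kk => #|{: 'X_{1..N < kk.2}}|)).
  move=> [k d] l Hu Hk /=; rewrite leqNgt; apply/negP => Hl.
  set D := #|{: 'X_{1..N < d}}| in Hl *.
  pose cs (j : 'I_D.+1) := nth 0 l j.
  have jl (j : 'I_D.+1) : (j < size l)%N by apply: leq_trans (ltn_ord j) Hl.
  have csl j : cs j \in l by apply: mem_nth.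
  have csinj : injective cs.
    by move=> j1 j2 /eqP; rewrite /cs nth_uniq // => /eqP /val_inj.
  have Hk1 j : (kz (cs j)).1 = k by have := Hk _ (csl j); case.
  have Hk2 j : msize (kz (cs j)).2 = d by have := Hk _ (csl j); case.
  have [lam [Hlam Hsum]] := @lin_dep N d (fun j => (kz (cs j)).2) (fun j => eq_leq (Hk2 j)).
  apply: (@poly_contra N M i D.+1 cs lam (fun j => (kz (cs j)).2) (p ^+ k)) => //.
  - by move=> j; rewrite -(Hk1 j); apply: Hkz.
  - by apply: MS; exists k.
  - by move=> c H; apply: Hno; exists c.
have [a Ha] := choice _ Hpt.
have Hcong := cong_eval _ _ _ HM Ha.
have Hz : forall q, I q -> q.@[a] = 0.
  move=> q Iq; apply: Mc.
  have -> : (q.@[a])%:MP = q - (q - (q.@[a])%:MP) by rewrite opprB addrC subrK.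
  by apply: ideal_sub => //; apply: IM.
apply: (MS p); first by exists 1%N; rewrite expr1.
by have := Hcong p; rewrite (Hp a Hz) rmorph0 subr0.
Qed.

Section Phi.
Variables (n m : nat) (a : 'I_(n + m) -> CC).

Definition ev (w : DVar n m) : CC := if w.2 == 0%N then a w.1 else 0.
Definition hD (k : DMonom n m) : CC := \prod_(w <- finsupp k) ev w ^+ k w.

Lemma hD_wide (k : DMonom n m) (d : {fset DVar n m}) : (finsupp k `<=` d)%fset ->
  hD k = \prod_(w <- d) ev w ^+ k w.
Proof.
move=> kd; rewrite /hD; apply: big_fset_incl => // w _ wk.
by move: wk; rewrite -cmE_neq0 negbK => /eqP ->; rewrite expr0.
Qed.

Lemma hD_mmorphism : mmorphism hD.
Proof.
split.
  move=> k1 k2 /=; rewrite (hD_wide _ (finsupp k1 `|` finsupp k2)%fset); last by rewrite mdomD.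
  rewrite (hD_wide k1 (finsupp k1 `|` finsupp k2)%fset) ?fsubsetUl //.
  rewrite (hD_wide k2 (finsupp k1 `|` finsupp k2)%fset) ?fsubsetUr //.
  by rewrite -big_split /=; apply: eq_bigr => w _; rewrite cmM exprD.
by rewrite /hD mdom1 big_seq_fset0.
Qed.

HB.instance Definition _ := monalg.isMultiplicative.Build (DMonom n m) CC hD hD_mmorphism.

Definition phi (q : DPoly n m) : CC := monalg.mmap idfun hD q.

Lemma phiD x y : phi (x + y) = phi x + phi y.
Proof. exact: raddfD. Qed.
Lemma phiB x y : phi (x - y) = phi x - phi y.
Proof. exact: raddfB. Qed.
Lemma phiM x y : phi (x * y) = phi x * phi y.
Proof. exact: rmorphM. Qed.

Lemma phi_dvar v p : phi (dvar v p) = ev (v, p).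
Proof.
rewrite /phi /dvar mmapU /= mul1r /hD.
rewrite (_ : finsupp (ucm ((v, p) : DVar n m)) = [fset ((v, p) : DVar n m)]%fset); last exact: mdomU.
by rewrite big_seq_fset1 (cmUU (v, p)) expr1.
Qed.

Lemma phi_dconst c : phi (dconst n m c) = c.
Proof. by rewrite /phi /dconst mmapU /= (mmorph1 hD) mulr1. Qed.

Lemma phi1 : phi 1 = 1.
Proof. exact: rmorph1. Qed.

Lemma phi_iotaD p : phi (Defs.iotaD p) = p.@[a].
Proof.
rewrite /phi /Defs.iotaD /mpoly.mmap mevalE raddf_sum /=; apply: eq_bigr => k _.
rewrite rmorphM /= -/(phi _) phi_dconst rmorph_prod /=; congr (_ * _).
by apply: eq_bigr => i _; rewrite rmorphXn /= -/(phi _) phi_dvar /ev.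
Qed.

Lemma phi_delta q : phi (delta q) = 0.
Proof.
rewrite /phi /delta [monalg.mmap (dconst _ _) _ _]monalg.mmapE raddf_sum /=; apply: big1 => k _.
rewrite rmorphM /= /dmonom raddf_sum /= big1 ?mulr0 // => w _.
rewrite rmorphM /= [X in _ * X](_ : _ = ev (w.1, w.2.+1)); first by rewrite /ev mulr0.
exact: phi_dvar.
Qed.
End Phi.
Arguments phi {n m} a q.
Arguments ev {n m} a w.

Section Deriv.
Variable N : nat.
Local Notation PN := (mpoly.mpoly N CC).
Variables (a b : 'I_N -> CC).

Definition Dfun (p : PN) : CC := \sum_v (mderiv v p).@[a] * b v.

Lemma Dfun0 : Dfun 0 = 0.
Proof. by rewrite /Dfun big1 // => v _; rewrite mderiv0 meval0 mul0r. Qed.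

Lemma DfunD x y : Dfun (x + y) = Dfun x + Dfun y.
Proof.
by rewrite /Dfun -big_split; apply: eq_bigr => v _; rewrite mderivD mevalD mulrDl.
Qed.

Lemma DfunM x y : Dfun (x * y) = x.@[a] * Dfun y + y.@[a] * Dfun x.
Proof.
rewrite /Dfun !mulr_sumr -big_split; apply: eq_bigr => v _ /=.
rewrite mderivM mevalD !rmorphM /= mulrDl addrC; congr (_ + _).
  by rewrite mulrCA mulrA.
by rewrite mulrA.
Qed.

Lemma DfunC c : Dfun c%:MP = 0.
Proof. by rewrite /Dfun big1 // => v _; rewrite mderivC meval0 mul0r. Qed.

Lemma DfunX v : Dfun 'X_v = b v.
Proof.
rewrite /Dfun (bigD1 v) //= big1 ?addr0.
  rewrite mderivX mnm1E eqxx mevalZ /= mul1r.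
  have -> : (U_(v) - U_(v))%MM = 0%MM by apply/mnmP => i; rewrite mnmBE subnn mnm0E.
  by rewrite mpolyX0 meval1 mul1r.
move=> w Hw; rewrite mderivX mnm1E eq_sym (negbTE Hw) scale0r meval0 mul0r //.
Qed.

Definition Dideal (p : PN) : Prop := p.@[a] = 0 /\ Dfun p = 0.

Lemma Dideal_ideal : is_ideal Dideal.
Proof.
split; first by split; [rewrite meval0|rewrite Dfun0].
split.
  by move=> x y [H1 H2] [H3 H4]; split; [rewrite mevalD H1 H3 addr0|rewrite DfunD H2 H4 addr0].
move=> x y [H1 H2]; split; first by rewrite rmorphM /= H1 mulr0.
by rewrite DfunM H1 H2 mul0r mulr0 addr0.
Qed.
End Deriv.
Arguments Dfun {N} a b p.

Lemma isolated_deriv N (J : mpoly.mpoly N CC -> Prop) (a b : 'I_N -> CC) (v : 'I_N) :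
  is_ideal J -> (forall p k, J (p ^+ k) -> J p) ->
  variety_dim_le (zeroset J) 0 -> zeroset J a ->
  (forall p, J p -> Dfun a b p = 0) -> b v = 0.
Proof.
move=> HJ Jrad Hdim Ha HD.
pose x : mpoly.mpoly N CC := 'X_v - (a v)%:MP.
have xa : x.@[a] = 0 by rewrite /x mevalB mevalXU mevalC subrr.
have Dx : Dfun a b x = b v.
  by rewrite /x DfunD -rmorphN DfunC addr0 DfunX.
pose W := vanishing (zeroset J).
pose S := fun t : mpoly.mpoly N CC => exists s k, s.@[a] != 0 /\ t = s * x ^+ k.
have [[t [[s [k [Hs ->]]] Wt]]|Hno] := classic (exists t, S t /\ W t).
  pose h := s * x.
  have Wh : forall c, zeroset J c -> h.@[c] = 0.
    move=> c Hc; have := Wt c Hc; rewrite /h !rmorphM /= rmorphXn /=.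
    move/eqP; rewrite mulf_eq0 expf_eq0 => /orP [/eqP ->|/andP [_ /eqP ->]];
      by rewrite ?mul0r ?mulr0.
  have [k' Hk'] := nullstellensatz N J h HJ Wh.
  have Jh := Jrad _ _ Hk'.
  have := HD _ Jh; rewrite /h DfunM Dx xa mul0r addr0 => /eqP.
  by rewrite mulf_eq0 (negbTE Hs) /= => /eqP.
exfalso.
have HW : is_ideal W.
  split; first by move=> c _; rewrite meval0.
  split; first by move=> p q Hp Hq c Hc; rewrite mevalD Hp // Hq // addr0.
  by move=> p q Hq c Hc; rewrite rmorphM /= Hq // mulr0.
have S1 : S 1 by exists 1, 0%N; rewrite meval1 oner_eq0 expr0 mulr1.
have SM : forall p q, S p -> S q -> S (p * q).
  move=> p q [s1 [k1 [H1 ->]]] [s2 [k2 [H2 ->]]]; exists (s1 * s2), (k1 + k2)%N.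
  split; first by rewrite rmorphM /= mulf_neq0.
  by rewrite exprD mulrACA.
have WS : forall t, S t -> ~ W t by move=> t St Wt; apply: Hno; exists t.
have [M [HM [WM [MS Mmax]]]] := max_ideal_avoid _ _ _ HW S1 SM WS.
have Mpr := max_ideal_prime _ _ _ HM S1 SM MS Mmax.
pose P1 := fun q : mpoly.mpoly N CC => q.@[a] = 0.
have P1pr : prime_ideal P1.
  split; last split.
  - split; first by rewrite /P1 meval0.
    split; first by move=> p q; rewrite /P1 mevalD => -> ->; rewrite addr0.
    by move=> p q; rewrite /P1 rmorphM /= => ->; rewrite mulr0.
  - by rewrite /P1 meval1; apply/eqP; rewrite oner_eq0.
  - by move=> p q; rewrite /P1 rmorphM /= => /eqP; rewrite mulf_eq0 => /orP [/eqP|/eqP]; [left|right].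
have WP1 : forall q, W q -> P1 q by move=> q Wq; apply: Wq.
have MP1 : forall q, M q -> P1 q.
  move=> q Mq; apply: NNPP => Hq; apply: (MS q) => //.
  by exists q, 0%N; rewrite expr0 mulr1; split => //; apply/eqP.
apply: Hdim; exists (fun k => if k == 0%N then M else P1); split.
  by move=> k _; case: (k == 0%N); split.
move=> k; rewrite ltnS leqn0 => /eqP -> /=; split => //.
exists x; split => // Mx; apply: (MS x) => //.
by exists 1, 1%N; rewrite meval1 oner_eq0 expr1 mul1r.
Qed.

Section Main.
Variables (n m s : nat) (f : 'I_n -> mpoly.mpoly (n + m) CC) (g : 'I_s -> mpoly.mpoly (n + m) CC).

Lemma Iseq_radical i p k : Iseq f g i (p ^+ k) -> Iseq f g i p.
Proof. by case: i => [|i] /= [k' H]; exists (k * k')%N; rewrite exprM. Qed.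

Lemma Iseq_succ i p : Iseq f g i p -> Iseq f g i.+1 p.
Proof.
move=> H; exists 1%N; rewrite expr1; exists [:: (1, Defs.iota1 p)]; split.
  by move=> q [<-|[]]; exists p; split => //; left.
by rewrite big_seq1 mul1r.
Qed.

Lemma Iseq_le i j p : (i <= j)%N -> Iseq f g i p -> Iseq f g j p.
Proof.
elim: j => [|j IH]; first by rewrite leqn0 => /eqP ->.
rewrite leq_eqVlt => /orP [/eqP -> //|]; rewrite ltnS => /IH H /H.
exact: Iseq_succ.
Qed.

Lemma g_I0 k : Iseq f g 0 (g k).
Proof. by exists 1%N; rewrite expr1; apply: ideal_gen_in; exists k. Qed.

Lemma iotaD_ideal (J : DPoly n m -> Prop) (G : mpoly.mpoly (n + m) CC -> Prop) :
  is_ideal J -> (forall q, G q -> J (Defs.iotaD q)) ->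
  forall p, ideal_gen G p -> J (Defs.iotaD p).
Proof.
move=> HJ HG p [r [Hr ->]]; rewrite /Defs.iotaD rmorph_sum.
apply: ideal_sum => // q Hq; rewrite rmorphM.
by case: HJ => [_ [_ JM]]; apply: JM; apply: HG; apply: Hr.
Qed.

Lemma is_ideal_iff (A : comNzRingType) (I J : A -> Prop) :
  (forall p, I p <-> J p) -> is_ideal J -> is_ideal I.
Proof.
move=> E [J0 [JD JM]]; split; first exact/E.
by split => [x y /E Hx /E Hy|x y /E Hy]; apply/E; [apply: JD|apply: JM].
Qed.

Lemma eval_iota2 (pt : 'I_(n + m + (n + m)) -> CC) p :
  (iota2 p).@[pt] = p.@[fun v => pt (lshift (n + m) v)].
Proof.
rewrite /iota2 /mpoly.mmap [RHS]mevalE rmorph_sum; apply: eq_bigr => k _.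
rewrite rmorphM /= mevalC rmorph_prod; congr (_ * _); apply: eq_bigr => i _.
by rewrite rmorphXn /= mevalXU.
Qed.

Lemma eval_dot2 (pt : 'I_(n + m + (n + m)) -> CC) p :
  (dot2 p).@[pt] = Dfun (fun v => pt (lshift (n + m) v)) (fun v => pt (rshift (n + m) v)) p.
Proof.
rewrite /dot2 /Dfun rmorph_sum; apply: eq_bigr => v _.
by rewrite rmorphM /= eval_iota2 /dvar2 mevalXU.
Qed.
End Main.

Theorem proposition4p6 (n m s : nat)
  (f : 'I_n -> mpoly.mpoly (n + m) CC) (g : 'I_s -> mpoly.mpoly (n + m) CC) :
  (* 1 \in [x' - f, g] in C{x,u} *)
  dideal_sys f (fun p => exists k, p = g k) 1 ->
  (* V(g) is nonempty *)
  (exists a : 'I_(n + m) -> CC, forall k, (g k).@[a] = 0) ->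
  forall rho : nat,
  (* rho = min { i | dim V(I_i) <= 0 } *)
  variety_dim_le (zeroset (Iseq f g rho)) 0 ->
  (forall j, (j < rho)%N -> ~ variety_dim_le (zeroset (Iseq f g j)) 0) ->
  (forall i, (i <= rho)%N ->
     forall gi : seq (mpoly.mpoly (n + m) CC),
       (forall p, Iseq f g i p <-> ideal_gen (fun q => q \in gi) p) ->
       dideal_sys f (fun p => p \in gi) 1)
  /\
  (forall grho : seq (mpoly.mpoly (n + m) CC),
     (forall p, Iseq f g rho p <-> ideal_gen (fun q => q \in grho) p) ->
     ideal_gen (fun q : mpoly.mpoly ((n + m) + (n + m)) CC =>
          (exists j : 'I_n, q = dvar2 (xvar m j) - iota2 (f j))
       \/ (exists p, p \in grho /\ q = iota2 p)
       \/ (exists p, p \in grho /\ q = dot2 p)) 1).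
Proof.
move=> H1 _ rho Hdim _.
split.
  move=> i Hi gi Hgi J HJ Hd HS; apply: H1 => // q [[j ->]|[p [[k ->] ->]]].
    by apply: HS; left; exists j.
  apply: (iotaD_ideal _ _ J (fun q => q \in gi)) => //.
    by move=> q' Hq'; apply: HS; right; exists q'.
  by apply/Hgi; apply: (Iseq_le _ _ _ _ _ 0%N i _ (leq0n i)); apply: g_I0.
move=> grho Hgr.
suff [k Hk] : exists k, ideal_gen (fun q : mpoly.mpoly ((n + m) + (n + m)) CC =>
          (exists j : 'I_n, q = dvar2 (xvar m j) - iota2 (f j))
       \/ (exists p, p \in grho /\ q = iota2 p)
       \/ (exists p, p \in grho /\ q = dot2 p)) (1 ^+ k) by rewrite expr1n in Hk.
apply: nullstellensatz; first exact: ideal_gen_ideal.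
move=> pt Hpt; exfalso.
pose a := fun v => pt (lshift (n + m) v); pose b := fun v => pt (rshift (n + m) v).
have HJi : is_ideal (Iseq f g rho) by apply: (is_ideal_iff _ _ _ Hgr); apply: ideal_gen_ideal.
have Hgen : forall q, q \in grho -> Dideal _ a b q.
  move=> q Hq; split.
    by rewrite -(eval_iota2 _ _ pt); apply: Hpt; apply: ideal_gen_in; right; left; exists q.
  by rewrite -(eval_dot2 _ _ pt); apply: Hpt; apply: ideal_gen_in; right; right; exists q.
have HJd : forall p, Iseq f g rho p -> Dideal _ a b p.
  move=> p /Hgr; apply: ideal_gen_min; first exact: Dideal_ideal.
  exact: Hgen.
have Hf : forall j, b (xvar m j) = (f j).@[a].
  move=> j; have := Hpt (dvar2 (xvar m j) - iota2 (f j)).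
  rewrite mevalB eval_iota2 /dvar2 mevalXU => H; apply/eqP; rewrite -subr_eq0; apply/eqP.
  by apply: H; apply: ideal_gen_in; left; exists j.
have Ha : zeroset (Iseq f g rho) a by move=> p /HJd [].
have Hf0 : forall j, (f j).@[a] = 0.
  move=> j; rewrite -Hf; apply: (isolated_deriv _ (Iseq f g rho) a b) => //.
  - by move=> p k; apply: Iseq_radical.
  - by move=> p /HJd [].
have Hg0 : forall k, (g k).@[a] = 0.
  by move=> k; apply: Ha; apply: (Iseq_le _ _ _ _ _ 0%N rho _ (leq0n rho)); apply: g_I0.
have := H1 (fun q => phi a q = 0).
have phi0 : phi a 0 = 0 by apply: raddf0.
rewrite phi1 => H; suff : (1 : CC) = 0 by move/eqP; rewrite oner_eq0.
apply: H.
- split => //; split; first by move=> x y Hx Hy; rewrite phiD Hx Hy addr0.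
  by move=> x y Hy; rewrite phiM Hy mulr0.
- by move=> q _; apply: phi_delta.
- move=> q [[j ->]|[p [[k ->] ->]]].
    by rewrite phiB phi_iotaD Hf0 subr0 phi_dvar /ev.
  by rewrite phi_iotaD Hg0.
Qed.
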